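(* Let $X$ be a separable Banach space, $\mu_{\mathrm{prior}}$ a Borel probability measure on $X$, $\mathcal L^\dagger:X\to\mathbb R^d$ measurable, $\Phi^{\dagger,y}(\bar u)=-\log\rho(y-\mathcal L^\dagger(\bar u))$, $Z^\dagger(y)=\int_Xe^{-\Phi^{\dagger,y}}d\mu_{\mathrm{prior}}$ and $\frac{d\mu^y}{d\mu_{\mathrm{prior}}}=Z^\dagger(y)^{-1}e^{-\Phi^{\dagger,y}}$. Then $$Z^\dagger(y)\ge\exp\Big(-\int_X\Phi^{\dagger,y}d\mu_{\mathrm{prior}}\Big),\qquad \frac{d\mu^y}{d\mu_{\mathrm{prior}}}(\bar u)\le\exp\Big(\int_X\Phi^{\dagger,y}d\mu_{\mathrm{prior}}-\operatorname*{ess\,inf}_{u\in X}\Phi^{\dagger,y}(u)\Big)\ \ \forall\bar u.$$ In particular, if $\rho$ satisfies (N.1)–(N.3), there is $C>0$ depending only on $\rho$ such that $Z^\dagger(y)\ge C^{-1}\exp(-|y|_\Gamma^2-\|\mathcal L^\dagger\|_{L^2(\mu_{\mathrm{prior}})}^2)$ and $\frac{d\mu^y}{d\mu_{\mathrm{prior}}}(\bar u)\le C\exp(|y|_\Gamma^2+\|\mathcal L^\dagger\|_{L^2(\mu_{\mathrm{prior}})}^2)$ for all $\bar u\in X$.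
   Context: $\|\mathcal L^\dagger\|_{L^2(\mu_{\mathrm{prior}})}=(\int_X|\mathcal L^\dagger(\bar u)|_\Gamma^2\mu_{\mathrm{prior}}(d\bar u))^{1/2}$, $|y|_\Gamma=\langle y,\Gamma^{-1}y\rangle^{1/2}$ for a fixed symmetric positive definite $\Gamma$. $\rho>0$ is a probability density on $\mathbb R^d$; (N.1) $\rho$ is Lipschitz w.r.t. $|\cdot|_\Gamma$; (N.2) $\sup\rho<\infty$; (N.3) $\rho(y)\ge C^{-1}e^{-|y|_\Gamma^2/2}$. *)

(* Defs.v *)
From HB Require Import structures.
From mathcomp Require Import all_boot all_order all_algebra.
From mathcomp Require Import all_classical all_reals all_analysis ess_sup_inf.
Set Implicit Arguments. Unset Strict Implicit. Unset Printing Implicit Defensive.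
Import Order.TTheory GRing.Theory Num.Theory.
Import numFieldNormedType.Exports.
Local Open Scope classical_set_scope.
Local Open Scope ring_scope.

Definition spd_mx {R : realType} {d : nat} (G : 'M[R]_d) : Prop :=
  G^T = G /\ (forall v : 'rV[R]_d, v != 0 -> 0 < (v *m G *m v^T) 0 0).

Definition normG2 {R : realType} {d : nat} (G : 'M[R]_d) (y : 'rV[R]_d) : R :=
  (y *m invmx G *m y^T) 0 0.
Definition normG {R : realType} {d : nat} (G : 'M[R]_d) (y : 'rV[R]_d) : R :=
  Num.sqrt (normG2 G y).

Definition borel_rV {R : realType} {d : nat} (A : set 'rV[R]_d) : Prop :=
  <<s open >> A.

Definition borel_fun_rV {R : realType} {d : nat} (f : 'rV[R]_d -> R) : Prop :=
  forall B : set R, measurable B -> borel_rV (f @^-1` B).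

(** Lebesgue integral over R^d of a nonnegative function, written as the
    iterated one-dimensional Lebesgue integral (equal to the integral w.r.t.
    d-dimensional Lebesgue measure for nonnegative Borel f by Tonelli). *)
Fixpoint leb_int_rV {R : realType} (n : nat) : ('rV[R]_n -> \bar R) -> \bar R :=
  match n return ('rV[R]_n -> \bar R) -> \bar R with
  | 0 => fun f => f 0
  | n'.+1 => fun f =>
      (\int[@lebesgue_measure R]_(x in [set: R])
         leb_int_rV (fun v : 'rV[R]_n' => f (row_mx (const_mx x : 'rV[R]_1) v)))%E
  end.

Definition prob_density {R : realType} {d : nat} (rho : 'rV[R]_d -> R) : Prop :=
  borel_fun_rV rho /\ (forall y, 0 <= rho y) /\
  leb_int_rV (fun y => (rho y)%:E) = 1%E.

Definition cond_N1 {R : realType} {d : nat} (G : 'M[R]_d) (rho : 'rV[R]_d -> R) :=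
  exists K : R, forall x z, `|rho x - rho z| <= K * normG G (x - z).
Definition cond_N2 {R : realType} {d : nat} (rho : 'rV[R]_d -> R) :=
  exists M : R, forall y, rho y <= M.
Definition cond_N3 {R : realType} {d : nat} (G : 'M[R]_d) (rho : 'rV[R]_d -> R) :=
  exists C : R, 0 < C /\ forall y, C^-1 * expR (- (normG2 G y / 2)) <= rho y.

(** Measurability of L : X -> R^d (each coordinate is measurable, i.e.
    measurability for the product = Borel sigma-algebra of R^d). *)
Definition meas_rV {dX} {X : measurableType dX} {R : realType} {d : nat}
  (L : X -> 'rV[R]_d) : Prop :=
  forall i : 'I_d, measurable_fun [set: X] (fun u => L u 0 i).

Definition Phi {X : Type} {R : realType} {d : nat} (rho : 'rV[R]_d -> R)
  (L : X -> 'rV[R]_d) (y : 'rV[R]_d) (u : X) : R :=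
  - ln (rho (y - L u)).

Definition Zdag {dX} {X : measurableType dX} {R : realType} {d : nat}
  (mu : probability X R) (rho : 'rV[R]_d -> R) (L : X -> 'rV[R]_d)
  (y : 'rV[R]_d) : \bar R :=
  (\int[mu]_(u in [set: X]) (expR (- Phi rho L y u))%:E)%E.

Definition post_density {dX} {X : measurableType dX} {R : realType} {d : nat}
  (mu : probability X R) (rho : 'rV[R]_d -> R) (L : X -> 'rV[R]_d)
  (y : 'rV[R]_d) (u : X) : R :=
  expR (- Phi rho L y u) / fine (Zdag mu rho L y).

Definition int_Phi {dX} {X : measurableType dX} {R : realType} {d : nat}
  (mu : probability X R) (rho : 'rV[R]_d -> R) (L : X -> 'rV[R]_d)
  (y : 'rV[R]_d) : \bar R :=
  (\int[mu]_(u in [set: X]) (Phi rho L y u)%:E)%E.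

Definition L2norm2 {dX} {X : measurableType dX} {R : realType} {d : nat}
  (mu : probability X R) (G : 'M[R]_d) (L : X -> 'rV[R]_d) : \bar R :=
  (\int[mu]_(u in [set: X]) (normG2 G (L u))%:E)%E.

(* Main.v *)
Require Import Defs.
Set Warnings "-all".
From HB Require Import structures.
From mathcomp Require Import all_boot all_order all_algebra.
From mathcomp Require Import all_classical all_reals all_analysis ess_sup_inf.
From mathcomp Require Import lra ring measurable_realfun.
Import Order.TTheory GRing.Theory Num.Theory.
Import numFieldNormedType.Exports.
Local Open Scope classical_set_scope.
Local Open Scope ring_scope.

Section Mx.
Context (R : realType) (d : nat) (G : 'M[R]_d).
Hypothesis hG : spd_mx G.

Lemma spd_unit : G \in unitmx.
Proof.
rewrite unitmxE unitfE; apply/negP => /det0P[v v0 vG].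
have := hG.2 v v0; rewrite vG mul0mx mxE ltxx //.
Qed.

Lemma psd_inv (w : 'rV[R]_d) : 0 <= (w *m invmx G *m w^T) 0 0.
Proof.
set v := w *m invmx G.
have e : v *m G *m v^T = w *m invmx G *m w^T.
  rewrite /v -(mulmxA w) mulVmx ?spd_unit // mulmx1 trmx_mul trmx_inv hG.1 mulmxA //.
rewrite -e; have [->|v0] := eqVneq v 0.
  by rewrite !mul0mx mxE.
exact/ltW/hG.2.
Qed.

Lemma normG2_sym (a b : 'rV[R]_d) :
  (b *m invmx G *m a^T) 0 0 = (a *m invmx G *m b^T) 0 0.
Proof.
have e : (b *m invmx G *m a^T)^T = a *m invmx G *m b^T.
  by rewrite trmx_mul trmxK trmx_mul trmx_inv hG.1 mulmxA.
by rewrite -e [RHS]mxE.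
Qed.

Lemma normG2_tri (a b : 'rV[R]_d) :
  normG2 G (a - b) <= 2 * normG2 G a + 2 * normG2 G b.
Proof.
rewrite /normG2.
have e1 : (a - b) *m invmx G *m (a - b)^T = a *m invmx G *m a^T - a *m invmx G *m b^T - (b *m invmx G *m a^T - b *m invmx G *m b^T).
  by rewrite linearB /= !mulmxBl !mulmxBr.
have e2 : (a + b) *m invmx G *m (a + b)^T = a *m invmx G *m a^T + a *m invmx G *m b^T + (b *m invmx G *m a^T + b *m invmx G *m b^T).
  by rewrite linearD /= !mulmxDl !mulmxDr.
have hD : forall A B : 'M[R]_1, (A + B) 0 0 = A 0 0 + B 0 0 by move=> *; rewrite mxE.
have hN : forall A : 'M[R]_1, (- A) 0 0 = - A 0 0 by move=> *; rewrite !mxE.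
have := psd_inv (a + b); rewrite e1 e2 !hD !hN !hD !hN (normG2_sym a b).
set p := (a *m invmx G *m a^T) 0 0; set q := (b *m invmx G *m b^T) 0 0.
set r := (a *m invmx G *m b^T) 0 0.
lra.
Qed.
End Mx.

Section M.
Context (R : realType) (d : nat) (dX : measure_display) (X : measurableType dX).

Definition boxr (p : 'rV[rat]_d * rat) : set 'rV[R]_d :=
  [set w | forall j, `|ratr (p.1 0 j) - w 0 j| < ratr p.2].

Lemma open_meas (g : X -> 'rV[R]_d) :
  (forall j, measurable_fun [set: X] (fun u => g u 0 j)) ->
  forall O : set 'rV[R]_d, open O -> measurable (g @^-1` O).
Proof.
move=> mg O oO.
pose P (p : 'rV[rat]_d * rat) := boxr p `<=` O.
have -> : O = \bigcup_p [set w | P p /\ boxr p w].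
  apply/seteqP; split; last by move=> w [p _ [Pp bw]]; exact: Pp.
  move=> v Ov.
  have /nbhs_ballP[e e0 sub] : nbhs v O by apply: open_nbhs_nbhs; split.
  have [r] : exists r : rat, ratr r \in `]0, e / 2[.
    by apply: rat_in_itvoo; rewrite divr_gt0.
  rewrite in_itv /= => /andP[r0 re].
  have hq : forall j : 'I_d, exists q : rat, ratr q \in `](v 0 j - ratr r), (v 0 j + ratr r)[.
    by move=> j; apply: rat_in_itvoo; rewrite ltrBlDr -addrA ltrDl addr_gt0.
  have [f hf] := choice hq.
  exists (\row_j f j, r) => //; split.
    move=> w bw; apply: sub; split => // i j.
    rewrite (ord1 i) -ball_normE /=.
    have := hf j; rewrite in_itv /= => /andP[h1 h2].
    have := bw j; rewrite /= mxE => h3.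
    rewrite (_ : v 0 j - w 0 j = (v 0 j - ratr (f j)) + (ratr (f j) - w 0 j)); last by rewrite addrA subrK.
    apply: (le_lt_trans (ler_normD _ _)).
    have h4 : `|v 0 j - ratr (f j)| < ratr r.
      by rewrite ltr_norml; apply/andP; split; lra.
    lra.
  move=> j /=; rewrite mxE.
  have := hf j; rewrite in_itv /= => /andP[h1 h2].
  rewrite ltr_norml; apply/andP; split; lra.
rewrite preimage_bigcup; apply: countable_bigcupT_measurable; first exact: countableP.
move=> p; have [Pp|nPp] := pselect (P p); last first.
  rewrite (_ : _ @^-1` _ = set0); first exact: measurable0.
  by apply/seteqP; split => // u [].
rewrite (_ : _ @^-1` _ = \big[setI/setT]_(j <- enum 'I_d) [set u | `|ratr (p.1 0 j) - g u 0 j| < ratr p.2]).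
  apply: bigsetI_measurable => j _.
  rewrite (_ : [set u | _] = [set: X] `&` (fun u => `|ratr (p.1 0 j) - g u 0 j|) @^-1` `]-oo, ratr p.2[).
    apply: (measurableT_comp (@measurable_realfun.normr_measurable R setT)) => //.
      apply: measurable_realfun.measurable_funB => //; exact: measurable_cst.
  by apply/seteqP; split => u /=; rewrite in_itv /=; [move=> h; split|case].
apply/seteqP; split => u /=.
  move=> [_ bu]; rewrite -bigcap_seq /= => j _; exact: bu.
rewrite -bigcap_seq /= => h; split => // j; apply: h => //; exact: mem_enum.
Qed.
Lemma borel_meas (g : X -> 'rV[R]_d) :
  (forall j, measurable_fun [set: X] (fun u => g u 0 j)) ->
  forall A, <<s open >> A -> measurable (g @^-1` A).
Proof.
move=> mg A hA.
have : [set A | measurable (g @^-1` A)] A; last by [].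
apply: (smallest_sub _ _ hA); last by move=> O oO; exact: open_meas.
split => /=.
- by rewrite preimage_set0.
- by move=> B mB; rewrite setTD preimage_setC; apply: measurableC.
- by move=> F mF; rewrite preimage_bigcup; apply: bigcupT_measurable.
Qed.
Local Open Scope ereal_scope.
Lemma jensen_exp (mu : probability X R) (f : X -> R) :
  measurable_fun [set: X] f ->
  expeR (- \int[mu]_(x in [set: X]) (f x)%:E) <=
  \int[mu]_(x in [set: X]) (expR (- f x))%:E.
Proof.
move=> mf.
have mfE : measurable_fun [set: X] (EFin \o f) by apply/measurable_realfun.measurable_EFinP.
have mexp : measurable_fun [set: X] (fun x => (expR (- f x))%:E).
  apply/measurable_realfun.measurable_EFinP.
  apply: (measurableT_comp (@measurable_realfun.measurable_expR R)).
  exact: measurableT_comp (@oppr_measurable R setT) mf.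
have RHS0 : 0 <= \int[mu]_(x in [set: X]) (expR (- f x))%:E.
  by apply: integral_ge0 => x _; rewrite lee_fin expR_ge0.
set I := \int[mu]_(x in [set: X]) (f x)%:E.
have [Ifin|Inf] := boolP (I \is a fin_num); last first.
  move: Inf; rewrite fin_numE negb_and !negbK => /orP[/eqP Ino|/eqP Ipo]; last first.
    by rewrite Ipo.
  have : \int[mu]_(x in [set: X]) (EFin \o f)^\- x = +oo.
    move: Ino; rewrite /I integralE.
    have := integral_ge0 mu (fun x _ => funepos_ge0 (EFin \o f) x) (D := [set: X]).
    case: (\int[mu]_(x in _) _^\+ x) => [r||] //; case: (\int[mu]_(x in _) _^\- x) => [s||] //.
  move=> Ninf.
  suff : +oo <= \int[mu]_(x in [set: X]) (expR (- f x))%:E.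
    by rewrite leye_eq => /eqP ->; rewrite leey.
  rewrite -Ninf; apply: ge0_le_integral => //.
  - by apply: measurable_funeneg.
  - move=> x _; rewrite funenegE /=.
    rewrite ge_max lee_fin; apply/andP; split; last by rewrite lee_fin expR_ge0.
    have := expR_ge1Dx (- f x); lra.
have intf : mu.-integrable [set: X] (EFin \o f).
  by apply/integrableP; split => //; rewrite integral_fin_num_abs.
have [Eoo|Efin] := eqVneq (\int[mu]_(x in [set: X]) (expR (- f x))%:E) +oo.
  by rewrite Eoo leey.
have inte : mu.-integrable [set: X] (fun x => (expR (- f x))%:E).
  apply/integrableP; split => //.
  under eq_integral do rewrite gee0_abs ?lee_fin ?expR_ge0//.
  by rewrite ltey.
set m := fine I.
have Im : I = m%:E by rewrite /m fineK.
rewrite Im /=.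
have intc : mu.-integrable [set: X] (EFin \o cst (1 + m)%R).
  exact: finite_measure_integrable_cst.
have intg : mu.-integrable [set: X] (fun x => (expR (- m))%:E * ((EFin \o cst (1 + m)%R) x - (EFin \o f) x)).
  by apply: integrableZl => //; apply: integrableB.
apply: (@le_trans _ _ (\int[mu]_(x in [set: X]) ((expR (- m))%:E * ((EFin \o cst (1 + m)%R) x - (EFin \o f) x)))).
  rewrite integralZl //; last by apply: integrableB.
  rewrite integralB_EFin //= integral_cst //= probability_setT mule1 -/I Im.
  rewrite -EFinB -EFinM lee_fin.
  by rewrite addrK mulr1.
apply: le_integral => // x _ /=.
rewrite -EFinD -EFinM lee_fin.
have h := expR_ge1Dx (m - f x).
have -> : expR (- f x) = (expR (- m) * expR (m - f x))%R.
  by rewrite -expRD; congr expR; ring.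
apply: ler_wpM2l; first exact: expR_ge0.
lra.
Qed.
Local Close Scope ereal_scope.

Lemma rho_meas (rho : 'rV[R]_d -> R) (L : X -> 'rV[R]_d) y :
  prob_density rho -> meas_rV L ->
  measurable_fun [set: X] (fun u => rho (y - L u)).
Proof.
move=> [hb _] mL _ B mB; rewrite setTI.
have -> : (fun u => rho (y - L u)) @^-1` B = (fun u => y - L u) @^-1` (rho @^-1` B) by [].
apply: borel_meas; last exact: hb.
move=> j.
rewrite (_ : (fun u => (y - L u) 0 j) = (fun u => y 0 j - L u 0 j)); last first.
  by apply: funext => u; rewrite !mxE.
apply: measurable_funB; [exact: measurable_cst | exact: mL].
Qed.

Lemma Phi_meas (rho : 'rV[R]_d -> R) (L : X -> 'rV[R]_d) y :
  prob_density rho -> meas_rV L ->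
  measurable_fun [set: X] (Phi rho L y).
Proof.
move=> hr mL; rewrite /Phi.
apply: (measurableT_comp (@oppr_measurable R setT)).
apply: (measurableT_comp (@measurable_ln R)).
exact: rho_meas.
Qed.

Lemma q_meas (G : 'M[R]_d) (L : X -> 'rV[R]_d) : meas_rV L ->
  measurable_fun [set: X] (fun u => normG2 G (L u)).
Proof.
move=> mL.
rewrite (_ : (fun u => normG2 G (L u)) = (fun u => \sum_(k <- enum 'I_d) (\sum_(l <- enum 'I_d) L u 0 l * invmx G l k) * L u 0 k)); last first.
  apply: funext => u; rewrite /normG2 mxE big_enum /=; apply: eq_bigr => k _.
  by rewrite !mxE big_enum.
apply: measurable_sum => k; apply: measurable_funM; last exact: mL.
apply: measurable_sum => l; apply: measurable_funM; first exact: mL.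
exact: measurable_cst.
Qed.
End M.

Local Open Scope ereal_scope.
Lemma part1 (R : realType) (d : nat) (rho : 'rV[R]_d -> R) (dX : measure_display) (X : measurableType dX)
  (mu : probability X R) (L : X -> 'rV[R]_d) (y : 'rV[R]_d) :
  prob_density rho -> meas_rV L ->
  expeR (- int_Phi mu rho L y) <= Zdag mu rho L y.
Proof. by move=> hr mL; apply: jensen_exp; exact: Phi_meas. Qed.

Lemma part2 (R : realType) (d : nat) (rho : 'rV[R]_d -> R) (dX : measure_display) (X : measurableType dX)
  (mu : probability X R) (L : X -> 'rV[R]_d) (y : 'rV[R]_d) :
  prob_density rho -> meas_rV L -> Zdag mu rho L y < +oo ->
  {ae mu, forall u, ((post_density mu rho L y u)%:E <=
         expeR (int_Phi mu rho L y
                - ess_inf mu (fun v => (Phi rho L y v)%:E)))}.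
Proof.
move=> hr mL Zfin.
have p1 := @part1 _ _ rho _ _ mu L y hr mL.
apply: filterS (ess_inf_le mu (fun v => (Phi rho L y v)%:E)) => u hu.
have Z0 : 0 <= Zdag mu rho L y.
  by apply: integral_ge0 => x _; rewrite lee_fin expR_ge0.
move: p1 Z0 Zfin; rewrite /post_density.
case: (Zdag mu rho L y) => [z| |] p1 z0 zf; last 2 first.
- by rewrite ltxx in zf.
- by [].
rewrite /=.
have [->|zn0] := eqVneq z 0%R.
  by rewrite invr0 mulr0 expeR_ge0.
have zpos : (0 < z)%R by rewrite lt0r zn0 -lee_fin.
move: hu p1.
case: (int_Phi mu rho L y) => [r| |]; case: (ess_inf mu _) => [s| |] //= hu p1.
- rewrite lee_fin ler_pdivrMr //.
  rewrite lee_fin in hu p1.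
  apply: (@le_trans _ _ (expR (- s))%R); first by rewrite ler_expR lerN2.
  apply: (@le_trans _ _ (expR (r - s) * expR (- r))%R); last by rewrite ler_wpM2l ?expR_ge0.
  by rewrite -expRD (_ : (r - s + - r = - s)%R) //; ring.
- by rewrite leey.
- by rewrite leey.
- by rewrite leey.
Qed.

Local Close Scope ereal_scope.
Lemma part3 (R : realType) (d : nat) (G : 'M[R]_d) (rho : 'rV[R]_d -> R) :
  spd_mx G -> prob_density rho -> (forall z, (0 < rho z)%R) ->
  cond_N2 rho -> cond_N3 G rho ->
   exists C : R, (0 < C)%R /\
   forall (dX : measure_display) (X : measurableType dX)
          (mu : probability X R) (L : X -> 'rV[R]_d) (y : 'rV[R]_d),
     meas_rV L ->
     ((C^-1)%:E * expeR (- (normG2 G y)%:E - L2norm2 mu G L)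
        <= Zdag mu rho L y)%E /\
     (forall u : X, ((post_density mu rho L y u)%:E <=
        C%:E * expeR ((normG2 G y)%:E + L2norm2 mu G L))%E).
Proof.
move=> hG hr rpos [M hM] [C3 [C30 hC3]].
have M0 : (0 < M)%R by apply: (lt_le_trans (rpos 0%R)); exact: hM.
have mx0 : (0 < Num.max 1 M)%R by rewrite lt_max ltr01.
have hC3i : (0 <= C3^-1)%R by rewrite invr_ge0 ltW.
exists (C3 * Num.max 1 M)%R; split; first by rewrite mulr_gt0.
move=> dX X mu L y mL.
set qy := normG2 G y.
have expPhi : forall u, expR (- Phi rho L y u) = rho (y - L u).
  by move=> u; rewrite /Phi opprK lnK // posrE.
have key : forall u, (C3^-1 * expR (- qy) * expR (- normG2 G (L u)) <= rho (y - L u))%R.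
  move=> u; apply: le_trans (hC3 (y - L u)).
  rewrite -mulrA -expRD; apply: ler_wpM2l; first by rewrite invr_ge0 ltW.
  rewrite ler_expR.
  have := @normG2_tri _ _ _ hG y (L u); rewrite -/qy; lra.
have mq := @q_meas _ _ _ _ G L mL.
have L20 : (0 <= L2norm2 mu G L)%E.
  by apply: integral_ge0 => x _; rewrite lee_fin (@psd_inv _ _ _ hG).
have Zlow : ((C3^-1 * expR (- qy))%:E * expeR (- L2norm2 mu G L) <= Zdag mu rho L y)%E.
  rewrite /Zdag.
  under eq_integral do rewrite expPhi.
  apply: (@le_trans _ _ (\int[mu]_(u in [set: X]) ((C3^-1 * expR (- qy))%:E * (expR (- normG2 G (L u)))%:E))%E).
    have mexpq : measurable_fun [set: X] (fun x => (expR (- normG2 G (L x)))%:E).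
      apply/measurable_EFinP.
      apply: (measurableT_comp (@measurable_expR R)).
      exact: measurableT_comp (@oppr_measurable R setT) mq.
    have expq0 : forall x, [set: X] x -> (0 <= (expR (- normG2 G (L x)))%:E)%E.
      by move=> x _; rewrite lee_fin expR_ge0.
    rewrite ge0_integralZl_EFin //; last by rewrite mulr_ge0 ?expR_ge0.
    rewrite lee_wpmul2l //; first by rewrite lee_fin mulr_ge0 ?expR_ge0.
    exact: jensen_exp.
  apply: ge0_le_integral => //.
  - by move=> x _; rewrite -EFinM lee_fin !mulr_ge0 ?expR_ge0.
  - apply/measurable_EFinP.
    apply: measurable_funM; first exact: measurable_cst.
    apply: (measurableT_comp (@measurable_expR R)).
    exact: measurableT_comp (@oppr_measurable R setT) mq.
  - by apply/measurable_EFinP; exact: rho_meas.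
  - by move=> x _; rewrite -EFinM lee_fin key.
split.
  apply: le_trans Zlow.
  rewrite expeRD -EFinN /= muleA -EFinM lee_wpmul2r ?expeR_ge0 // lee_fin.
  rewrite ler_wpM2r ?expR_ge0 // lef_pV2 ?posrE ?mulr_gt0 //.
  by rewrite ler_peMr ?le_max ?lexx // ltW.
move=> u; rewrite /post_density expPhi.
move: Zlow L20; case: (L2norm2 mu G L) => [l| |] Zl l0 //; last first.
  rewrite /=.
  rewrite gt0_muley ?leey // lte_fin mulr_gt0 //.
rewrite -EFinD /= .
move: Zl; case: (Zdag mu rho L y) => [z| |] Zl; last 2 first.
- by rewrite /= invr0 mulr0 lee_fin mulr_ge0 ?expR_ge0 // mulr_ge0 // ltW.
- by move: Zl; rewrite leeNy_eq.
move: Zl; rewrite /= -!EFinM !lee_fin => Zl.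
have K0 : (0 < expR (qy + l))%R by exact: expR_gt0.
have hK : (C3^-1 * expR (- qy) * expR (- l) = C3^-1 * (expR (qy + l))^-1)%R.
  by rewrite -mulrA -expRD -expRN opprD.
rewrite hK in Zl.
have zpos : (0 < z)%R.
  by apply: lt_le_trans Zl; rewrite mulr_gt0 ?invr_gt0.
rewrite ler_pdivrMr //.
apply: le_trans (hM _) _.
apply: (@le_trans _ _ (Num.max 1 M)); first by rewrite le_max lexx orbT.
apply: (@le_trans _ _ (C3 * Num.max 1 M * expR (qy + l) * (C3^-1 * (expR (qy + l))^-1))%R).
  rewrite (_ : (C3 * Num.max 1 M * expR (qy + l) * (C3^-1 * (expR (qy + l))^-1) = Num.max 1 M)%R) //.
  by field; rewrite !gt_eqF.
rewrite ler_wpM2l // !mulr_ge0 // ltW //.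
Qed.

Theorem mainTheorem8 (R : realType) (d : nat) (G : 'M[R]_d)
  (rho : 'rV[R]_d -> R) :
  spd_mx G -> prob_density rho -> (forall z, 0 < rho z) ->
  (* general bounds *)
  (forall (dX : measure_display) (X : measurableType dX)
          (mu : probability X R) (L : X -> 'rV[R]_d) (y : 'rV[R]_d),
     meas_rV L ->
     (expeR (- int_Phi mu rho L y) <= Zdag mu rho L y)%E /\
     ((Zdag mu rho L y < +oo)%E ->
      {ae mu, forall u, ((post_density mu rho L y u)%:E <=
         expeR (int_Phi mu rho L y
                - ess_inf mu (fun v => (Phi rho L y v)%:E)))%E})) /\
  (* bounds under (N.1)-(N.3) *)
  (cond_N1 G rho -> cond_N2 rho -> cond_N3 G rho ->
   exists C : R, 0 < C /\
   forall (dX : measure_display) (X : measurableType dX)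
          (mu : probability X R) (L : X -> 'rV[R]_d) (y : 'rV[R]_d),
     meas_rV L ->
     ((C^-1)%:E * expeR (- (normG2 G y)%:E - L2norm2 mu G L)
        <= Zdag mu rho L y)%E /\
     (forall u : X, ((post_density mu rho L y u)%:E <=
        C%:E * expeR ((normG2 G y)%:E + L2norm2 mu G L))%E)).
Proof.
move=> hG hr rpos; split.
  move=> dX X mu L y mL; split; first exact: part1.
  exact: part2.
move=> _ h2 h3; exact: part3.
Qed.
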